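(* Let $q$ be a set of operations on a set $\Omega$ and write $\sim$ for $\sim_q$. Then: (1) $\mathrm{Sim}(q)/\!\sim\;=\mathrm{Aut}(q/\!\sim)$, where $\mathrm{Sim}(q)/\!\sim\;=\{\pi/\!\sim:\pi\in\mathrm{Sim}(q)\}$; (2) a quantifier $Q$ on $\Omega$ belongs to $\mathrm{Inv}(\mathrm{Sim}(q))$ if and only if $Q/\!\sim\;\in\mathrm{Inv}(\mathrm{Aut}(q/\!\sim))$.
   Context: A similarity on $\Omega$ is a relation $\pi\subseteq\Omega\times\Omega$ such that every $a$ has some $b$ with $a\pi b$ and every $b$ has some $a$ with $a\pi b$; for relations $R,S\subseteq\Omega^k$, $R\,\pi\,S$ means that coordinatewise $\bar a\pi\bar b$ implies ($\bar a\in R\iff\bar b\in S$). A set of operations is a set of finitary relations and quantifiers (subsets of $\mathcal P(\Omega^{k_1})\times\cdots\times\mathcal P(\Omega^{k_l})$) on $\Omega$; $\mathscr L^-_{\infty\infty}(q)$ is the equality-free infinitary logic with predicate and Lindström quantifier symbols for members of $q$. $a\sim_q b$ iff for all formulas $\phi(x,\bar y)$ of $\mathscr L^-_{\infty\infty}(q)$ and tuples $\bar c$, $\phi(a,\bar c)\iff\phi(b,\bar c)$. A relation is invariant under a similarity or equivalence $\rho$ if $\bar a\rho\bar b$ implies $\bar a\in R\iff\bar b\in R$; a quantifier $Q$ is $\sim$-invariant under $\pi$ if for all $\bar R,\bar S$ of its type with each component invariant under $\sim$ and $R_i\,\pi\,S_i$: $\bar R\in Q\iff\bar S\in Q$. $\mathrm{Sim}(q)$: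 similarities under which all relations of $q$ are invariant and all quantifiers of $q$ are $\sim_q$-invariant. For a set $\Pi$ of similarities, $a\approx_\Pi b$ iff for each finite $k$ and $\bar c\in\Omega^k$ some $\pi\in\Pi$ has $(a,\bar c)\,\pi\,(b,\bar c)$; $\mathrm{Inv}(\Pi)$ is the set of relations invariant under all $\pi\in\Pi$ and quantifiers $\approx_\Pi$-invariant under all $\pi\in\Pi$. With $[a]$ the $\sim$-class of $a$: $\pi/\!\sim\;=\{([a],[b]):a\pi b\}$; for $R\subseteq\Omega^k$, $R/\!\sim\;=\{([a_1],\dots,[a_k]):(a_1,\dots,a_k)\in R\}$; for $R'\subseteq(\Omega/\!\sim)^k$, $\cup R'=\{\bar a\in\Omega^k:([a_1],\dots,[a_k])\in R'\}$; for a quantifier $Q$ on $\Omega$, $Q/\!\sim\;=\{(R'_1,\dots,R'_l):(\cup R'_1,\dots,\cup R'_l)\in Q\}$; $q/\!\sim$ is the set of $R/\!\sim$ and $Q/\!\sim$ for relations $R$ and quantifiers $Q$ in $q$. For a set $\mathcal Q$ of relations and quantifiers on a set $\Omega'$, $\mathrm{Aut}(\mathcal Q)$ is the set of permutations $f$ of $\Omega'$ with $fR=R$ for relations and $(R_1,\dots,R_l)\in Q\iff(fR_1,\dots,fR_l)\in Q$ for quantifiers in $\mathcal Q$; for a set $H$ of permutations of $\Omega'$, $\mathrm{Inv}(H)$ is the set of relations and quantifiers on $\Omega'$ preserved in this sense by all $f\in H$. *)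

(* Defs.v *)
From mathcomp Require Import all_boot.
Set Implicit Arguments. Unset Strict Implicit. Unset Printing Implicit Defensive.

Definition relT (Omega : Type) (k : nat) := ('I_k -> Omega) -> Prop.
(* A quantifier of type (k_0,...,k_{l-1}) is a subset of P(Omega^k_0) x ... x P(Omega^k_{l-1}). *)
Definition quantT (Omega : Type) {l : nat} (k : 'I_l -> nat) :=
  (forall m : 'I_l, relT Omega (k m)) -> Prop.

(* A set of operations on Omega, given as an indexed family of relations
   (index type RI, arities rar) and of quantifiers (index type QI, types qlen/qar). *)
Unset Implicit Arguments.
Record ops (Omega : Type) := Ops {
  RI : Type;
  rar : RI -> nat;
  rel : forall i : RI, relT Omega (rar i);
  QI : Type;
  qlen : QI -> nat;
  qar : forall j : QI, 'I_(qlen j) -> nat;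
  quant : forall j : QI, quantT Omega (qar j)
}.
Arguments RI {Omega} : rename.
Arguments rar {Omega q} : rename.
Arguments rel {Omega} q i : rename.
Arguments QI {Omega} : rename.
Arguments qlen {Omega q} : rename.
Arguments qar {Omega q} j : rename.
Arguments quant {Omega} q j : rename.
Set Implicit Arguments.

(* Connectives: atomic formulas for the
   relations of q (no equality), negation, conjunction over an arbitrary index type,
   existential quantification over an arbitrary set of variables, and Lindstrom
   quantifiers of q binding tuples of pairwise distinct variables. *)
Inductive form (Omega : Type) (q : ops Omega) (V : eqType) : Type :=
| FRel (i : RI q) (xs : 'I_(rar i) -> V)
| FNeg (phi : form q V)
| FAnd (J : Type) (phis : J -> form q V)
| FEx (X : V -> Prop) (phi : form q V)
| FQ (j : QI q) (xs : forall m : 'I_(qlen j), 'I_(qar j m) -> V)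
     (xinj : forall m, injective (xs m))
     (phis : forall m : 'I_(qlen j), form q V).

Definition updt (Omega : Type) (V : eqType) (s : V -> Omega) (n : nat)
  (xs : 'I_n -> V) (a : 'I_n -> Omega) : V -> Omega :=
  fun v => match [pick i | xs i == v] with Some i => a i | None => s v end.

Fixpoint sat (Omega : Type) (q : ops Omega) (V : eqType) (phi : form q V)
  : (V -> Omega) -> Prop :=
  match phi with
  | FRel i xs => fun s => rel q i (fun t => s (xs t))
  | FNeg phi => fun s => ~ sat phi s
  | FAnd J phis => fun s => forall t : J, sat (phis t) s
  | FEx X phi => fun s => exists s' : V -> Omega,
                    (forall v, ~ X v -> s' v = s v) /\ sat phi s'
  | FQ j xs _ phis => fun s =>
      quant q j (fun m a => sat (phis m) (updt s (xs m) a))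
  end.

Fixpoint free (Omega : Type) (q : ops Omega) (V : eqType) (phi : form q V)
  : V -> Prop :=
  match phi with
  | FRel i xs => fun v => exists t, xs t = v
  | FNeg phi => fun v => free phi v
  | FAnd J phis => fun v => exists t : J, free (phis t) v
  | FEx X phi => fun v => free phi v /\ ~ X v
  | FQ j xs _ phis => fun v =>
      exists m, free (phis m) v /\ (forall t, xs m t <> v)
  end.

(* a ~_q b : every formula phi(x, ybar) (free variables among x and the finite
   list ybar) satisfies phi(a, cbar) <-> phi(b, cbar) for all parameters cbar. *)
Definition simq (Omega : Type) (q : ops Omega) (a b : Omega) : Prop :=
  forall (V : eqType) (phi : form q V) (x : V) (ys : seq V),
    (forall v, free phi v -> v = x \/ v \in ys) ->
    forall s : V -> Omega,
      sat phi (fun v => if v == x then a else s v) <->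
      sat phi (fun v => if v == x then b else s v).

Definition is_similarity (Omega : Type) (pi : Omega -> Omega -> Prop) : Prop :=
  (forall a, exists b, pi a b) /\ (forall b, exists a, pi a b).

Definition rel_sim (Omega : Type) (pi : Omega -> Omega -> Prop) (k : nat)
  (R S : relT Omega k) : Prop :=
  forall a b : 'I_k -> Omega, (forall t, pi (a t) (b t)) -> (R a <-> S b).

Definition rel_inv (Omega : Type) (rho : Omega -> Omega -> Prop) (k : nat)
  (R : relT Omega k) : Prop := rel_sim rho R R.

Definition quant_inv (Omega : Type) (rho pi : Omega -> Omega -> Prop)
  (l : nat) (k : 'I_l -> nat) (Q : quantT Omega k) : Prop :=
  forall Rs Ss : forall m : 'I_l, relT Omega (k m),
    (forall m, rel_inv rho (Rs m)) -> (forall m, rel_inv rho (Ss m)) ->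
    (forall m, rel_sim pi (Rs m) (Ss m)) -> (Q Rs <-> Q Ss).

Definition Sim (Omega : Type) (q : ops Omega) (pi : Omega -> Omega -> Prop) : Prop :=
  [/\ is_similarity pi,
      (forall i, rel_inv pi (rel q i)) &
      (forall j, quant_inv (simq q) pi (quant q j))].

Definition approxP (Omega : Type) (Pi : (Omega -> Omega -> Prop) -> Prop)
  (a b : Omega) : Prop :=
  forall (k : nat) (c : 'I_k -> Omega), exists pi, [/\ Pi pi, pi a b &
      forall t, pi (c t) (c t)].

Definition InvQ (Omega : Type) (Pi : (Omega -> Omega -> Prop) -> Prop)
  (l : nat) (k : 'I_l -> nat) (Q : quantT Omega k) : Prop :=
  forall pi, Pi pi -> quant_inv (approxP Pi) pi Q.

Definition cls (Omega : Type) (q : ops Omega) : Type :=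
  {C : Omega -> Prop | exists a, C = simq q a}.

Definition cl (Omega : Type) (q : ops Omega) (a : Omega) : cls q :=
  exist _ (simq q a) (ex_intro _ a erefl).

Definition sim_quot (Omega : Type) (q : ops Omega) (pi : Omega -> Omega -> Prop)
  : cls q -> cls q -> Prop :=
  fun C D => exists a b, [/\ pi a b, C = cl q a & D = cl q b].

Definition rel_quot (Omega : Type) (q : ops Omega) (k : nat) (R : relT Omega k)
  : relT (cls q) k :=
  fun C => exists a : 'I_k -> Omega, R a /\ forall t, C t = cl q (a t).

Definition rel_cup (Omega : Type) (q : ops Omega) (k : nat) (R' : relT (cls q) k)
  : relT Omega k := fun a => R' (fun t => cl q (a t)).

Definition quant_quot (Omega : Type) (q : ops Omega) (l : nat) (k : 'I_l -> nat)
  (Q : quantT Omega k) : quantT (cls q) k :=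
  fun R's => Q (fun m => rel_cup (R's m)).

Definition ops_quot (Omega : Type) (q : ops Omega) : ops (cls q) :=
  @Ops (cls q) (RI q) (@rar _ q) (fun i => rel_quot (rel q i))
       (QI q) (@qlen _ q) (@qar _ q) (fun j => quant_quot (quant q j)).

Definition img (O : Type) (f : O -> O) (k : nat) (R : relT O k) : relT O k :=
  fun b => exists a, R a /\ forall t, f (a t) = b t.

Definition pres_rel (O : Type) (f : O -> O) (k : nat) (R : relT O k) : Prop :=
  forall b, img f R b <-> R b.

Definition pres_quant (O : Type) (f : O -> O) (l : nat) (k : 'I_l -> nat)
  (Q : quantT O k) : Prop :=
  forall Rs, Q Rs <-> Q (fun m => img f (Rs m)).

Definition Aut (O : Type) (Q : ops O) (f : O -> O) : Prop :=
  [/\ bijective f, (forall i, pres_rel f (rel Q i)) &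
      (forall j, pres_quant f (quant Q j))].

Definition InvH (O : Type) (H : (O -> O) -> Prop) (l : nat) (k : 'I_l -> nat)
  (Q : quantT O k) : Prop :=
  forall f, H f -> pres_quant f Q.

Arguments simq {Omega} q a b.
Arguments Sim {Omega} q pi.
Arguments cls {Omega} q.
Arguments cl {Omega} q a.
Arguments sim_quot {Omega} q pi C D.
Arguments ops_quot {Omega} q.
Arguments quant_quot {Omega q l k} Q R's.

(* Main.v *)
Require Import Defs.
From mathcomp Require Import all_boot.
From Stdlib Require Import ClassicalEpsilon FunctionalExtensionality PropExtensionality ProofIrrelevance.

Set Implicit Arguments. Unset Strict Implicit.

Definition cid := constructive_indefinite_description.

Lemma simq_refl Omega (q : ops Omega) a : simq q a a.
Proof. by move=> *. Qed.

Lemma simq_sym Omega (q : ops Omega) a b : simq q a b -> simq q b a.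
Proof. move=> H V phi x ys Hf s; exact: iff_sym (H V phi x ys Hf s). Qed.

Lemma simq_trans Omega (q : ops Omega) a b c : simq q a b -> simq q b c -> simq q a c.
Proof. move=> H1 H2 V phi x ys Hf s; exact: iff_trans (H1 V phi x ys Hf s) (H2 V phi x ys Hf s). Qed.

Lemma sig_eq A (P : A -> Prop) (x y : {a | P a}) : proj1_sig x = proj1_sig y -> x = y.
Proof. case: x => x px; case: y => y py /= E; subst; f_equal; apply: proof_irrelevance. Qed.

Lemma cl_eq Omega (q : ops Omega) a b : cl q a = cl q b <-> simq q a b.
Proof.
split.
- move=> /(f_equal (@proj1_sig _ _)) /= E.
  have : simq q b b by exact: simq_refl.
  by rewrite -E.
- move=> H; apply: sig_eq => /=.
  apply: functional_extensionality => c; apply: propositional_extensionality; split.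
  + move=> H'; exact: simq_trans (simq_sym H) H'.
  + move=> H'; exact: simq_trans H H'.
Qed.

Lemma cl_surj Omega (q : ops Omega) (C : cls q) : exists a, C = cl q a.
Proof. case: C => P [a e]; exists a; exact: sig_eq. Qed.

Lemma iff_eq (P Q : Prop) : (P <-> Q) -> P = Q.
Proof. exact: propositional_extensionality. Qed.

Lemma free_dep Omega (q : ops Omega) (V : eqType) (phi : form q V) :
  forall s s' : V -> Omega, (forall v, free phi v -> s v = s' v) ->
  (sat phi s <-> sat phi s').
Proof.
elim: phi => /=.
- move=> i xs s s' H.
  have -> : (fun t => s (xs t)) = (fun t => s' (xs t)).
    by apply: functional_extensionality => t; apply: H; exists t.
  by [].
- move=> phi IH s s' H; rewrite (IH s s' H); by [].
- move=> J phis IH s s' H; split=> Hs t.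
  + by rewrite -(IH t s s') // => v Hv; apply: H; exists t.
  + by rewrite (IH t s s') // => v Hv; apply: H; exists t.
- move=> X phi IH s s' H; split=> -[s1 [Hs1 Hsat]].
  + exists (fun v => if excluded_middle_informative (X v) then s1 v else s' v); split.
      by move=> v nX; case: excluded_middle_informative.
    apply/(IH s1) => // v Hv; case: excluded_middle_informative => // nX.
    by rewrite Hs1 // H.
  + exists (fun v => if excluded_middle_informative (X v) then s1 v else s v); split.
      by move=> v nX; case: excluded_middle_informative.
    apply/(IH s1) => // v Hv; case: excluded_middle_informative => // nX.
    by rewrite Hs1 // H.
- move=> j xs xinj phis IH s s' H.
  have -> // : (fun m a => sat (phis m) (updt s (xs m) a)) =
        (fun m a => sat (phis m) (updt s' (xs m) a)).
  apply: functional_extensionality_dep => m; apply: functional_extensionality => a.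
  apply: iff_eq; apply: IH => v Hv; rewrite /updt.
  case: pickP => [i _ // | Hn]; apply: H; exists m; split => // t Et.
  by move: (Hn t); rewrite Et eqxx.
Qed.

Lemma updt_rel Omega (V : eqType) (rho : Omega -> Omega -> Prop) (s s' : V -> Omega) n
  (xs : 'I_n -> V) a b :
  (forall v, rho (s v) (s' v)) -> (forall t, rho (a t) (b t)) ->
  forall v, rho (updt s xs a v) (updt s' xs b v).
Proof. by move=> H1 H2 v; rewrite /updt; case: pickP. Qed.

Lemma rel_simq Omega (q : ops Omega) i : rel_inv (simq q) (Defs.rel q i).
Proof.
move=> a b H.
set k := rar i in a b H *.
pose c n := fun t : 'I_k => if (t < n)%N then b t else a t.
suff Hn : forall n, Defs.rel q i a <-> Defs.rel q i (c n).
  have -> : b = c k by apply: functional_extensionality => t; rewrite /c ltn_ord.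
  exact: Hn.
elim=> [|n IH].
  have -> // : c 0 = a by apply: functional_extensionality => t.
apply: iff_trans IH _.
case: (ltnP n k) => Hnk; last first.
  have -> // : c n.+1 = c n.
  apply: functional_extensionality => t; rewrite /c.
  have h1 : (t < n)%N by apply: leq_trans (ltn_ord t) Hnk.
  by rewrite h1 ltnS ltnW.
set x := Ordinal Hnk.
have := H x ('I_k : eqType) (FRel (i:=i) (fun t => t)) x (enum 'I_k) _ (c n).
rewrite /=.
have -> : (fun t => if t == x then a x else c n t) = c n.
  apply: functional_extensionality => t; case: eqP => // ->.
  by rewrite /c /= ltnn.
have -> : (fun t => if t == x then b x else c n t) = c n.+1.
  apply: functional_extensionality => t; rewrite /c ltnS.
  case: eqP => [->|Ht] /=; first by rewrite leqnn.
  have Htn : (val t == n) = false by apply/eqP => E; apply: Ht; apply: val_inj.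
  by rewrite (leq_eqVlt t) Htn.

apply => v _; right; exact: mem_enum.
Qed.

Lemma sat_simq Omega (q : ops Omega) (V : eqType) (phi : form q V) :
  forall s s' : V -> Omega, (forall v, simq q (s v) (s' v)) ->
  (sat phi s <-> sat phi s').
Proof.
elim: phi => /=.
- move=> i xs s s' H; apply: rel_simq => t; exact: H.
- move=> phi IH s s' H; rewrite (IH s s' H); by [].
- move=> J phis IH s s' H; split=> Hs t.
  + by rewrite -(IH t s s').
  + by rewrite (IH t s s').
- move=> X phi IH s s' H; split=> -[s1 [Hs1 Hsat]].
  + exists (fun v => if excluded_middle_informative (X v) then s1 v else s' v); split.
      by move=> v nX; case: excluded_middle_informative.
    apply/(IH s1) => // v; case: excluded_middle_informative => nX.
      exact: simq_refl.
    by rewrite Hs1.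
  + exists (fun v => if excluded_middle_informative (X v) then s1 v else s v); split.
      by move=> v nX; case: excluded_middle_informative.
    apply/(IH s1) => // v; case: excluded_middle_informative => nX.
      exact: simq_refl.
    rewrite Hs1 //; exact: simq_sym.
- move=> j xs xinj phis IH s s' H.
  have -> // : (fun m a => sat (phis m) (updt s (xs m) a)) =
        (fun m a => sat (phis m) (updt s' (xs m) a)).
  apply: functional_extensionality_dep => m; apply: functional_extensionality => a.
  apply: iff_eq; apply: IH; apply: updt_rel => // t; exact: simq_refl.
Qed.

Lemma sat_sim Omega (q : ops Omega) pi (V : eqType) (phi : form q V) :
  Sim q pi ->
  forall s s' : V -> Omega, (forall v, pi (s v) (s' v)) ->
  (sat phi s <-> sat phi s').
Proof.
case=> [[Hl Hr] HR HQ].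
elim: phi => /=.
- move=> i xs s s' H; apply: HR => t; exact: H.
- move=> phi IH s s' H; rewrite (IH s s' H); by [].
- move=> J phis IH s s' H; split=> Hs t.
  + by rewrite -(IH t s s').
  + by rewrite (IH t s s').
- move=> X phi IH s s' H; split=> -[s1 [Hs1 Hsat]].
  + exists (fun v => if excluded_middle_informative (X v) then proj1_sig (cid (Hl (s1 v))) else s' v); split.
      by move=> v nX; case: excluded_middle_informative.
    apply/(IH s1) => // v; case: excluded_middle_informative => nX.
      exact: proj2_sig (cid (Hl (s1 v))).
    by rewrite Hs1.
  + exists (fun v => if excluded_middle_informative (X v) then proj1_sig (cid (Hr (s1 v))) else s v); split.
      by move=> v nX; case: excluded_middle_informative.
    apply: (proj2 (IH _ s1 _) Hsat) => v; case: excluded_middle_informative => nX.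
      exact: proj2_sig (cid (Hr (s1 v))).
    by rewrite /= Hs1.
- move=> j xs xinj phis IH s s' H.
  apply: HQ => m.
  + move=> a b Hab; apply: sat_simq; apply: updt_rel => // v; exact: simq_refl.
  + move=> a b Hab; apply: sat_simq; apply: updt_rel => // v; exact: simq_refl.
  + move=> a b Hab; apply: IH; exact: updt_rel.
Qed.

Lemma sim_cl_fwd Omega (q : ops Omega) pi a b a' b' :
  Sim q pi -> pi a b -> pi a' b' -> simq q a a' -> simq q b b'.
Proof.
move=> HS Hab Hab' H V phi x ys Hf s.
have [[_ Hr] _ _] := HS.
pose s0 v := proj1_sig (cid (Hr (s v))).
have Hs0 v : pi (s0 v) (s v) := proj2_sig (cid (Hr (s v))).
apply: iff_trans (iff_sym (@sat_sim _ _ _ _ phi HS (fun v => if v == x then a else s0 v) _ _)) _.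
  by move=> v; case: (v == x).
apply: iff_trans (H V phi x ys Hf s0) _.
apply: (@sat_sim _ _ _ _ phi HS) => v; by case: (v == x).
Qed.

Lemma sim_cl_bwd Omega (q : ops Omega) pi a b a' b' :
  Sim q pi -> pi a b -> pi a' b' -> simq q b b' -> simq q a a'.
Proof.
move=> HS Hab Hab' H V phi x ys Hf s.
have [[Hl _] _ _] := HS.
pose s0 v := proj1_sig (cid (Hl (s v))).
have Hs0 v : pi (s v) (s0 v) := proj2_sig (cid (Hl (s v))).
apply: iff_trans (@sat_sim _ _ _ _ phi HS _ (fun v => if v == x then b else s0 v) _) _.
  by move=> v; case: (v == x).
apply: iff_trans (H V phi x ys Hf s0) _.
apply: iff_sym; apply: (@sat_sim _ _ _ _ phi HS) => v; by case: (v == x).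
Qed.

Lemma cl_rel Omega (q : ops Omega) k (R : relT Omega k) :
  rel_inv (simq q) R -> forall b, rel_quot R (fun t => cl q (b t)) <-> R b.
Proof.
move=> HR b; split.
- case=> a [Ra E]; apply/(HR b a) => // t; apply/cl_eq; exact: E.
- move=> Rb; by exists b.
Qed.

Lemma cup_inv Omega (q : ops Omega) k (R' : relT (cls q) k) : rel_inv (simq q) (rel_cup R').
Proof.
move=> a b H; rewrite /rel_cup.
have -> // : (fun t => cl q (a t)) = (fun t => cl q (b t)).
by apply: functional_extensionality => t; apply/cl_eq.
Qed.

Lemma cup_quot Omega (q : ops Omega) k (R : relT Omega k) :
  rel_inv (simq q) R -> @rel_cup _ q _ (@rel_quot _ q _ R) = R.
Proof.
move=> HR; apply: functional_extensionality => a; apply: iff_eq; exact: cl_rel.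
Qed.

Lemma cup_img Omega (q : ops Omega) (f : cls q -> cls q) (Hinj : injective f) k
  (R' : relT (cls q) k) a b :
  (forall t, f (cl q (a t)) = cl q (b t)) -> (rel_cup R' a <-> rel_cup (img f R') b).
Proof.
move=> H; rewrite /rel_cup /img; split.
- move=> HR; exists (fun t => cl q (a t)); split => //.
- case=> A [HA EA].
  have -> : (fun t => cl q (a t)) = A => //.
  apply: functional_extensionality => t; apply: Hinj; by rewrite EA H.
Qed.

Lemma img_quot Omega (q : ops Omega) (f : cls q -> cls q) (Hinj : injective f) k
  (R : relT Omega k) a b :
  rel_inv (simq q) R -> (forall t, f (cl q (a t)) = cl q (b t)) ->
  (img f (rel_quot R) (fun t => cl q (b t)) <-> R a).
Proof.
move=> HR H; split.
- case=> A [[a' [Ra' EA]] EB].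
  apply/(HR a a') => // t; apply/cl_eq; apply: Hinj; by rewrite H -EB EA.
- move=> Ra; exists (fun t => cl q (a t)); split => //; by exists a.
Qed.

Lemma sim_aut Omega (q : ops Omega) pi : Sim q pi ->
  exists f, [/\ Aut (ops_quot q) f, (forall C D, sim_quot q pi C D <-> f C = D) &
             (forall a b, pi a b -> f (cl q a) = cl q b)].
Proof.
move=> HS; have [[Hl Hr] HR HQ] := HS.
pose rep (C : cls q) := proj1_sig (cid (cl_surj C)).
have Hrep C : C = cl q (rep C) := proj2_sig (cid (cl_surj C)).
pose fw a := proj1_sig (cid (Hl a)).
have Hfw a : pi a (fw a) := proj2_sig (cid (Hl a)).
pose bw b := proj1_sig (cid (Hr b)).
have Hbw b : pi (bw b) b := proj2_sig (cid (Hr b)).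
pose f C := cl q (fw (rep C)).
pose g D := cl q (bw (rep D)).
have Hf a b : pi a b -> f (cl q a) = cl q b.
  move=> Hab; rewrite /f; apply/cl_eq.
  apply: (sim_cl_fwd HS (Hfw _) Hab); apply/cl_eq; exact: esym (Hrep _).
have Hg a b : pi a b -> g (cl q b) = cl q a.
  move=> Hab; rewrite /g; apply/cl_eq.
  apply: (sim_cl_bwd HS (Hbw _) Hab); apply/cl_eq; exact: esym (Hrep _).
have fK : cancel f g.
  move=> C; apply: (etrans _ (esym (Hrep C))); apply: Hg; exact: Hfw.
have gK : cancel g f.
  move=> C; apply: (etrans _ (esym (Hrep C))); apply: Hf; exact: Hbw.
have finj := can_inj fK.
exists f; split => //.
- split.
  + by exists g.
  + move=> i B /=.
    pose b t := rep (B t).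
    have -> : B = (fun t => cl q (b t)).
      by apply: functional_extensionality => t; exact: Hrep.
    have H1 := @img_quot _ q f finj _ (Defs.rel q i) (fun t => bw (b t)) b (rel_simq (q:=q) (i:=i))
      (fun t => Hf _ _ (Hbw (b t))).
    apply: iff_trans H1 _.
    apply: iff_trans _ (iff_sym (cl_rel (rel_simq (q:=q) (i:=i)) b)).
    apply: HR => t; exact: Hbw.
  + move=> j Rs /=; rewrite /quant_quot.
    apply: HQ => m; [exact: cup_inv | exact: cup_inv |].
    move=> a b Hab; apply: cup_img => // t; exact: Hf.
- move=> C D; split.
  + by case=> a [b [Hab -> ->]]; apply: Hf.
  + move=> <-; exists (rep C), (fw (rep C)); split => //.
Qed.

Lemma aut_sim Omega (q : ops Omega) f : Aut (ops_quot q) f ->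
  Sim q (fun a b => f (cl q a) = cl q b).
Proof.
case=> [[g fK gK] HR HQ].
have finj := can_inj fK.
have Hpre b : exists a, f (cl q a) = cl q b.
  case: (cl_surj (g (cl q b))) => a Ea; exists a; by rewrite -Ea gK.
split.
- split.
  + move=> a; case: (cl_surj (f (cl q a))) => b Eb; by exists b.
  + exact: Hpre.
- move=> i a b Hab.
  have := HR i (fun t => cl q (b t)); rewrite /=.
  move=> H; apply: iff_trans (iff_sym (img_quot finj (rel_simq (q:=q) (i:=i)) Hab)) _.
  apply: iff_trans H _; exact: cl_rel (rel_simq (q:=q) (i:=i)) b.
- move=> j Rs Ss HRs HSs Hsim.
  have := HQ j (fun m => rel_quot (Rs m)); rewrite /= /quant_quot.
  have -> : (fun m => @rel_cup _ q _ (@rel_quot _ q _ (Rs m))) = Rs.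
    apply: functional_extensionality_dep => m; exact: cup_quot.
  have -> // : (fun m => rel_cup (img f (rel_quot (Rs m)))) = Ss.
  apply: functional_extensionality_dep => m; apply: functional_extensionality => b.
  apply: iff_eq; rewrite /rel_cup.
  pose a t := proj1_sig (cid (Hpre (b t))).
  have Ha t : f (cl q (a t)) = cl q (b t) := proj2_sig (cid (Hpre (b t))).
  apply: iff_trans (img_quot finj (HRs m) Ha) _.
  exact: Hsim.
Qed.

Lemma simq_Sim Omega (q : ops Omega) : Sim q (simq q).
Proof.
split.
- by split=> a; exists a; apply: simq_refl.
- exact: rel_simq.
- move=> j Rs Ss HRs HSs Hsim.
  have -> // : Rs = Ss.
  apply: functional_extensionality_dep => m; apply: functional_extensionality => a.
  apply: iff_eq; apply: Hsim => t; exact: simq_refl.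
Qed.

Lemma simq_approx Omega (q : ops Omega) a b : simq q a b -> approxP (Sim q) a b.
Proof.
move=> H k c; exists (simq q); split; [exact: simq_Sim | exact: H | move=> t; exact: simq_refl].
Qed.

Lemma approx_simq Omega (q : ops Omega) a b : approxP (Sim q) a b -> simq q a b.
Proof.
move=> H V phi x ys Hf s.
have [pi [HS Hab Hc]] := H (size ys) (fun t => s (nth x ys t)).
have [[Hl Hr] _ _] := HS.
pose s2 v := if v == x then b else if v \in ys then s v
             else proj1_sig (cid (Hl (s v))).
apply: iff_trans (@sat_sim _ _ _ _ phi HS _ s2 _) _.
  move=> v; rewrite /s2; case: (v == x) => //.
  case: ifP => Hin; last exact: proj2_sig (cid (Hl (s v))).
  have Hi : (index v ys < size ys)%N by rewrite index_mem.
  have := Hc (Ordinal Hi); by rewrite /= nth_index.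
apply: free_dep => v /Hf [->|Hin]; rewrite /s2; first by rewrite eqxx.
by case: (v == x); rewrite ?Hin.
Qed.

Theorem proposition17 (Omega : Type) (q : ops Omega) :
  (* (1) Sim(q)/~ = Aut(q/~), as sets of relations on Omega/~ *)
  ((forall pi, Sim q pi ->
      exists f, Aut (ops_quot q) f /\ forall C D, sim_quot q pi C D <-> f C = D) /\
   (forall f, Aut (ops_quot q) f ->
      exists pi, Sim q pi /\ forall C D, sim_quot q pi C D <-> f C = D)) /\
  (* (2) *)
  (forall (l : nat) (k : 'I_l -> nat) (Q : quantT Omega k),
      InvQ (Sim q) Q <-> InvH (Aut (ops_quot q)) (quant_quot Q)).
Proof.
split; first split.
- move=> pi HS; have [f [Hf Hc _]] := sim_aut HS; by exists f.
- move=> f Hf; exists (fun a b => f (cl q a) = cl q b); split; first exact: aut_sim.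
  move=> C D; split.
  + by case=> a [b [E -> ->]].
  + move=> E; case: (cl_surj C) => a Ea; case: (cl_surj D) => b Eb.
    exists a, b; split => //; by rewrite -Ea -Eb.
- move=> l k Q; split.
  + move=> HI f Haut Rs'.
    have HS := aut_sim Haut.
    have [[g fK _] _ _] := Haut; have finj := can_inj fK.
    rewrite /quant_quot.
    apply: (HI _ HS) => m.
    * move=> a b H; apply: cup_inv => t; exact: approx_simq (H t).
    * move=> a b H; apply: cup_inv => t; exact: approx_simq (H t).
    * move=> a b H; apply: (cup_img (q:=q) finj) => t; exact: (H t).
  + move=> HI pi HS Rs Ss HRs HSs Hsim.
    have [f [Haut _ Hf]] := sim_aut HS.
    have [[g fK _] _ _] := Haut; have finj := can_inj fK.
    have [[Hl Hr] _ _] := HS.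
    have HRs' m : rel_inv (simq q) (Rs m).
      move=> a b H; apply: HRs => t; exact: simq_approx (H t).
    have := HI f Haut (fun m => rel_quot (Rs m)); rewrite /quant_quot.
    have -> : (fun m => @rel_cup _ q _ (@rel_quot _ q _ (Rs m))) = Rs.
      apply: functional_extensionality_dep => m; exact: cup_quot.
    have -> // : (fun m => rel_cup (img f (rel_quot (Rs m)))) = Ss.
    apply: functional_extensionality_dep => m; apply: functional_extensionality => b.
    apply: iff_eq; rewrite /rel_cup.
    pose a t := proj1_sig (cid (Hr (b t))).
    have Ha t : pi (a t) (b t) := proj2_sig (cid (Hr (b t))).
    apply: iff_trans (img_quot finj (HRs' m) (fun t => Hf _ _ (Ha t))) _.
    exact: Hsim.
Qed.
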